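(* For every LCNF formula $\Phi$ and any two labelled clauses $C_1^{L_1}, C_2^{L_2} \in \Phi$, $\mathsf{MCS}(\mathsf{sub}(\Phi, C_1^{L_1}, C_2^{L_2})) = \mathsf{MCS}(\Phi)$.
   Context: Fix a countable set $Lbls$ of labels. A labelled clause $C^L$ is a pair of a clause $C$ (a finite set of literals) and a finite set $L \subseteq Lbls$. An LCNF formula $\Phi$ is a finite set of labelled clauses; $Cls(\Phi) = \{C : C^L \in \Phi\}$ and $Lbls(\Phi) = \bigcup_{C^L\in\Phi} L$. $\Phi$ is satisfiable iff $Cls(\Phi)$ is. For $M \subseteq Lbls(\Phi)$, the induced subformula is $\Phi|_M = \{C^L \in \Phi : L \subseteq M\}$. A set $R \subseteq Lbls(\Phi)$ is an MCS of $\Phi$ if (i) $\Phi|_{Lbls(\Phi)\setminus R}$ is satisfiable and (ii) for every $l \in R$, $\Phi|_{(Lbls(\Phi)\setminus R)\cup\{l\}}$ is unsatisfiable; $\mathsf{MCS}(\Phi)$ is the set of all MCSes of $\Phi$. A labelled clause $C_1^{L_1}$ subsumes $C_2^{L_2}$, written $C_1^{L_1} \subset C_2^{L_2}$, if $C_1 \subset C_2$ and $L_1 \subseteq L_2$. Define $\mathsf{sub}(\Phi, C_1^{L_1}, C_2^{L_2}) = \Phi \setminus \{C_2^{L_2}\}$ if $C_1^{L_1} \subset C_2^{L_2}$, and $\mathsf{sub}(\Phi, C_1^{L_1}, C_2^{L_2}) = \Phi$ otherwise. *)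

(* Defs.v *)
From HB Require Import structures.
From mathcomp Require Import all_boot finmap.
Set Implicit Arguments. Unset Strict Implicit. Unset Printing Implicit Defensive.
Local Open Scope fset_scope.

Section LCNF.
Variables (V Lbl : countType).

(* A literal is a variable with a polarity (true = positive). *)
Definition lit := (V * bool)%type.
Definition clause := {fset lit}.
Definition lclause := (clause * {fset Lbl})%type.
Definition lcnf := {fset lclause}.

Definition sat_lit (a : V -> bool) (x : lit) : bool := a x.1 == x.2.
Definition sat_clause (a : V -> bool) (C : clause) : bool :=
  [exists x : C, sat_lit a (val x)].

Definition satisfiable (Phi : lcnf) : Prop :=
  exists a : V -> bool, forall c, c \in Phi -> sat_clause a c.1.

Definition lbls (Phi : lcnf) : {fset Lbl} := \bigcup_(c <- Phi) c.2.

Definition induced (Phi : lcnf) (M : {fset Lbl}) : lcnf :=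
  [fset c in Phi | c.2 `<=` M].

Definition is_MCS (Phi : lcnf) (R : {fset Lbl}) : Prop :=
  [/\ R `<=` lbls Phi,
      satisfiable (induced Phi (lbls Phi `\` R))
    & forall l, l \in R -> ~ satisfiable (induced Phi ((lbls Phi `\` R) `|` [fset l]))].

Definition MCS (Phi : lcnf) : {fset Lbl} -> Prop := fun R => is_MCS Phi R.

Definition subsumes (c1 c2 : lclause) : bool := (c1.1 `<` c2.1) && (c1.2 `<=` c2.2).

Definition sub (Phi : lcnf) (c1 c2 : lclause) : lcnf :=
  if subsumes c1 c2 then Phi `\ c2 else Phi.
End LCNF.

(* Main.v *)
Require Import Defs.
From HB Require Import structures.
From mathcomp Require Import all_boot finmap.
From Stdlib Require Import FunctionalExtensionality PropExtensionality.
Local Open Scope fset_scope.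

Section Aux.
Variables (V Lbl : countType).
Implicit Types (Phi : lcnf V Lbl).

Lemma lbls_sub Phi c : c \in Phi -> c.2 `<=` lbls Phi.
Proof. by move=> cP; rewrite /lbls; apply: (bigfcup_sup (P := xpredT)). Qed.
Arguments lbls_sub {Phi c}.

Lemma lbls_mono Phi Psi : Psi `<=` Phi -> lbls Psi `<=` lbls Phi.
Proof.
move=> sub; apply/bigfcupsP => c cP _; apply: lbls_sub.
exact: (fsubsetP sub).
Qed.

Lemma induced_I Phi M : induced Phi M = induced Phi (M `&` lbls Phi).
Proof.
apply/fsetP => c; rewrite !inE fsubsetI.
by case cP: (c \in Phi) => //=; rewrite (lbls_sub cP) andbT.
Qed.

Lemma sat_sub Phi c1 c2 M : c1 \in Phi -> c2 \in Phi -> subsumes c1 c2 ->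
  satisfiable (induced Phi M) <-> satisfiable (induced (Phi `\ c2) M).
Proof.
move=> c1P c2P /andP[p12 s12]; split => [[a Ha]|[a Ha]].
  exists a => c; rewrite !inE => /andP[/andP[_ cP] cM]; apply: Ha.
  by rewrite !inE cP cM.
exists a => c; rewrite !inE => /andP[cP cM].
case: (eqVneq c c2) => [Ec|ne]; first subst c.
  have n12 : c1 != c2.
    by apply/eqP => E; move: p12; rewrite E fproperEneq eqxx.
  have : sat_clause a c1.1.
    by apply: Ha; rewrite !inE n12 c1P /=; apply: fsubset_trans s12 _.
  case/existsP => [[x xin]] /= sx; apply/existsP.
  have xin2 : x \in c2.1 by apply: (fsubsetP (fproper_sub p12)).
  by exists [` xin2].
by apply: Ha; rewrite !inE ne cP cM.
Qed.
End Aux.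

Theorem proposition3 (V Lbl : countType) (Phi : lcnf V Lbl) (c1 c2 : lclause V Lbl) :
  c1 \in Phi -> c2 \in Phi ->
  MCS (sub Phi c1 c2) = MCS Phi.
Proof.
move=> c1P c2P; rewrite /sub; case: ifP => // s12.
set Psi := Phi `\ c2.
have QP : lbls Psi `<=` lbls Phi by apply: lbls_mono; apply: fsubD1set.
have key : forall M, satisfiable (induced Phi M) <->
    satisfiable (induced Psi (M `&` lbls Psi)).
  by move=> M; rewrite -induced_I; exact: (@sat_sub V Lbl Phi c1 c2 M c1P c2P s12).
have keyQ : forall M, satisfiable (induced Psi M) <->
    satisfiable (induced Psi (M `&` lbls Psi)).
  by move=> M; rewrite -induced_I; exact: iff_refl.
have E1 : forall R, (lbls Phi `\` R) `&` lbls Psi = (lbls Psi `\` R) `&` lbls Psi.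
  move=> R; apply/fsetP => x; rewrite !inE.
  by case xQ: (x \in lbls Psi); rewrite ?andbF ?andbT //= (fsubsetP QP x xQ) andbT.
have E2 : forall R l, ((lbls Phi `\` R) `|` [fset l]) `&` lbls Psi =
    ((lbls Psi `\` R) `|` [fset l]) `&` lbls Psi.
  move=> R l; apply/fsetP => x; rewrite !inE.
  by case xQ: (x \in lbls Psi); rewrite ?andbF ?andbT //= (fsubsetP QP x xQ) andbT.
apply: functional_extensionality => R; apply: propositional_extensionality.
rewrite /MCS /is_MCS; split => [[RQ Hs Hn]|[RP Hs Hn]].
  split.
  - exact: fsubset_trans RQ QP.
  - apply: (proj2 (key _)); rewrite E1; exact: (proj1 (keyQ _) Hs).
  - move=> l lR H; apply: (Hn l lR); apply: (proj2 (keyQ _)); rewrite -E2.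
    exact: (proj1 (key _) H).
have RQ : R `<=` lbls Psi.
  apply/fsubsetP => l lR; apply/negPn/negP => lQ; apply: (Hn l lR).
  apply: (proj2 (key _)); move: (proj1 (key _) Hs); congr satisfiable; congr induced.
  apply/fsetP => x; rewrite !inE.
  by case: (eqVneq x l) => [->|]; rewrite ?(negbTE lQ) ?andbF ?orbF.
split => //.
- apply: (proj2 (keyQ _)); rewrite -E1; exact: (proj1 (key _) Hs).
- move=> l lR H; apply: (Hn l lR); apply: (proj2 (key _)); rewrite E2.
  exact: (proj1 (keyQ _) H).
Qed.
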